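(* Each of the following families of curves is a space-like solution to the mean curvature flow in $\mathbf R^{1,1}$: \begin{itemize} \item $\cosh x = e^{-t}\cosh y$, $t>0$; \item $\cosh x = e^{-t}\sinh y$, $t\in\mathbf R$; \item $\sinh x = e^{-t}\sinh y$, $t<0$; \item $\sin y = e^{-t}\sin x$, $t>0$. \end{itemize}
   Context: $\mathbf R^{1,1}$ is $\mathbf R^2$ with $\langle (x_1,y_1),(x_2,y_2)\rangle = x_1x_2-y_1y_2$. A curve is space-like if its tangent vectors $v$ satisfy $\langle v,v\rangle>0$. With Minkowski arc-length $s$, $T=X_s$, $N$ the reflection of $T$ across the line $y=x$, and $k$ defined by $T_s=kN$, a family of curves moves by mean curvature flow if $\langle\partial_tX,N\rangle=-k$ (equivalently, locally as graphs $y=y(x,t)$ with $|y_x|<1$: $y_t = y_{xx}/(1-y_x^2)$). *)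

(* Defs.v *)
From Stdlib Require Import Reals.
From Coquelicot Require Import Coquelicot.
Open Scope R_scope.

(* A time-dependent family of plane curves: C t is the set of points (x,y)
   of the curve at time t, for t in the time domain I. *)

Definition graph_MCF (u : R -> R -> R) (a b e f : R) : Prop :=
  exists ux uxx ut : R -> R -> R,
    forall x t, a < x < b -> e < t < f ->
      is_derive (fun z => u z t) x (ux x t) /\
      is_derive (fun z => ux z t) x (uxx x t) /\
      is_derive (fun s => u x s) t (ut x t) /\
      Rabs (ux x t) < 1 /\
      ut x t = uxx x t / (1 - (ux x t) ^ 2).

Definition spacelike_MCF (I : R -> Prop) (C : R -> R -> R -> Prop) : Prop :=
  (forall t, I t -> exists x y, C t x y) /\
  forall t0 x0 y0, I t0 -> C t0 x0 y0 ->
    exists (a b c d e f : R) (u : R -> R -> R),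
      a < x0 < b /\ c < y0 < d /\ e < t0 < f /\
      (forall t, e < t < f -> I t) /\
      graph_MCF u a b e f /\
      (forall x t, a < x < b -> e < t < f -> c < u x t < d) /\
      (forall x y t, a < x < b -> c < y < d -> e < t < f ->
         (C t x y <-> y = u x t)).

(* Main.v *)
Require Import Defs.
From Stdlib Require Import Reals.
From Coquelicot Require Import Coquelicot.
From Stdlib Require Import Lra Lia ZArith.
Open Scope R_scope.
Ltac fin s Hs w := field_simplify_eq; try replace (1 + - w^2) with (1 - w^2) by ring;
  try replace (- w^2 + 1) with (1 - w^2) by ring;
  try replace (s^2) with 1 by (rewrite <- Hs; ring); try ring.

Lemma d_arcsinh w : is_derive arcsinh w (/ sqrt (w^2+1)).
Proof. apply is_derive_Reals, derivable_pt_lim_arcsinh. Qed.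

Lemma sqrt1_pos w : 0 < sqrt (w^2+1).
Proof. apply sqrt_lt_R0. nra. Qed.

Lemma d_P1 w : is_derive (fun w => sqrt (w^2+1)) w (1 * w / sqrt (w^2+1)).
Proof.
  auto_derive; try replace (w * (w * 1)) with (w^2) by ring. nra. field. apply Rgt_not_eq, sqrt1_pos.
Qed.

Lemma d_asin w : -1 < w < 1 -> is_derive asin w (/ sqrt (1 - w^2)).
Proof.
  intros H. apply is_derive_Reals.
  pose proof (derive_pt_asin w H) as E.
  destruct (derivable_pt_asin w H) as [l Hl]. simpl in E.
  unfold derivable_pt_abs in Hl. replace (/ sqrt (1 - w^2)) with l. exact Hl.
  rewrite E. unfold Rsqr. replace (w^2) with (w*w) by ring. field.
  apply Rgt_not_eq, sqrt_lt_R0. nra.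
Qed.

Lemma d_Phi4 C0 s w : -1 < w < 1 -> s * s = 1 ->
  is_derive (fun w => C0 + s * asin w) w (/ (s * sqrt (1 - w^2))).
Proof.
  intros H Hs. assert (Q : 0 < sqrt (1 - w^2)) by (apply sqrt_lt_R0; nra).
  assert (D := d_asin w H).
  apply (is_derive_scal _ _ s) in D.
  pose proof (is_derive_plus _ _ _ _ _ (is_derive_const (K:=R_AbsRing) C0 w) D) as D'. clear D. rename D' into D.
  eapply filterdiff_ext_lin. exact D. intros y. simpl.
  rewrite plus_zero_l. unfold scal; simpl; unfold mult; simpl. replace (w*(w*1)) with (w^2) by ring. field_simplify_eq. replace (s^2) with (s*s) by ring. rewrite Hs; ring. split; [lra|]. intro; subst; lra.
Qed.

Lemma d_P4 s w : -1 < w < 1 -> s * s = 1 ->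
  is_derive (fun w => s * sqrt (1 - w^2)) w (-1 * w / (s * sqrt (1 - w^2))).
Proof.
  intros H Hs. assert (Q : 0 < sqrt (1 - w^2)) by (apply sqrt_lt_R0; nra).
  auto_derive; try replace (w * (w * 1)) with (w^2) by ring. nra. fin s Hs w.
  all: repeat split; intro HH; try subst; try lra; nra.
Qed.

Lemma d_Phi1 s w : 1 < w -> s * s = 1 ->
  is_derive (fun w => s * arcsinh (sqrt (w^2 - 1))) w (/ (s * sqrt (w^2 - 1))).
Proof.
  intros H Hs. assert (Q : 0 < sqrt (w^2 - 1)) by (apply sqrt_lt_R0; nra).
  assert (Ds : is_derive (fun w => sqrt (w^2-1)) w (w / sqrt (w^2 - 1))).
  { auto_derive; try replace (w * (w * 1)) with (w^2) by ring. nra. replace (w^2 + - (1)) with (w^2 - 1) by ring. field. lra. }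
  assert (D := @is_derive_comp R_AbsRing _ arcsinh (fun w => sqrt (w^2-1)) _ _ _ (d_arcsinh (sqrt (w^2-1))) Ds).
  apply (is_derive_scal _ _ s) in D.
  eapply filterdiff_ext_lin. exact D. intros y. simpl.
  unfold scal; simpl; unfold mult; simpl.
  replace (w * (w * 1)) with (w^2) by ring. rewrite Rmult_1_r, sqrt_sqrt by nra. replace (w^2 - 1 + 1) with (w^2) by ring.
  rewrite sqrt_pow2 by lra. fin s Hs w.
  all: repeat split; intro HH; try subst; try lra; nra.
Qed.

Lemma d_P1' s w : 1 < w -> s * s = 1 ->
  is_derive (fun w => s * sqrt (w^2 - 1)) w (1 * w / (s * sqrt (w^2 - 1))).
Proof.
  intros H Hs. assert (Q : 0 < sqrt (w^2 - 1)) by (apply sqrt_lt_R0; nra).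
  auto_derive; try replace (w * (w * 1)) with (w^2) by ring. nra. replace (w^2 + - (1)) with (w^2 - 1) by ring. fin s Hs w.
  all: repeat split; intro HH; try subst; try lra; nra.
Qed.

Lemma graph_gen (Phi P g g1 g2 k k1 : R->R) (sig : R) a b e f :
 (forall x t, a<x<b -> e<t<f ->
   is_derive Phi (k t * g x) (/ P (k t * g x)) /\
   is_derive P (k t * g x) (sig * (k t * g x) / P (k t * g x)) /\ P (k t * g x) <> 0 /\
   is_derive g x (g1 x) /\ is_derive g1 x (g2 x) /\ is_derive k t (k1 t) /\
   (k t * g1 x)^2 < (P (k t * g x))^2 /\
   k1 t * g x * (P (k t * g x) ^2 - (k t * g1 x)^2) =
     k t * g2 x * P (k t * g x) ^2 - sig * (k t)^3 * g x * (g1 x)^2) ->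
 graph_MCF (fun x t => Phi (k t * g x)) a b e f.
Proof.
  intros H.
  exists (fun x t => k t * g1 x / P (k t * g x)).
  exists (fun x t => (k t * g2 x * P (k t * g x) - k t * g1 x * (sig * (k t * g x) / P (k t * g x) * (k t * g1 x))) / P (k t * g x) ^ 2).
  exists (fun x t => k1 t * g x / P (k t * g x)).
  intros x t Hx Ht.
  destruct (H x t Hx Ht) as (HPhi & HP & HP0 & Hg & Hg1 & Hk & Hsp & Heq).

  assert (Hw : is_derive (fun z => k t * g z) x (k t * g1 x)).
  { apply (is_derive_scal g x (k t) (g1 x)) in Hg. exact Hg. }
  split; [|split; [|split; [|split]]].
  - eapply is_derive_ext; [intros z; reflexivity|].
    assert (Hc := is_derive_comp _ _ _ _ _ HPhi Hw).
    eapply filterdiff_ext_lin. exact Hc. intros y. simpl.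
    unfold scal; simpl; unfold mult; simpl. field. auto.
  - assert (H1 : is_derive (fun z => k t * g1 z) x (k t * g2 x)).
    { apply (is_derive_scal g1 x (k t) (g2 x)) in Hg1. exact Hg1. }
    assert (H2 : is_derive (fun z => P (k t * g z)) x (scal (k t * g1 x) (sig * (k t * g x) / P (k t * g x)))).
    { exact (is_derive_comp _ _ _ _ _ HP Hw). }
    assert (Hd := is_derive_div _ _ _ _ _ H1 H2 HP0).
    eapply filterdiff_ext_lin. exact Hd. intros y. simpl.
    unfold scal; simpl; unfold mult; simpl. field. auto.
  - assert (Hk' : is_derive (fun s => k s * g x) t (k1 t * g x)).
    { apply (is_derive_scal_l k t (k1 t) (g x)) in Hk. exact Hk. }
    assert (Hc := is_derive_comp _ _ _ _ _ HPhi Hk').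
    eapply filterdiff_ext_lin. exact Hc. intros y. simpl.
    unfold scal; simpl; unfold mult; simpl. field. auto.
  - assert (Hp2 : 0 < P (k t * g x) ^ 2).
    { apply pow2_gt_0 in HP0. simpl in *. nra. }
    assert (Hz : (k t * g1 x / P (k t * g x)) ^ 2 * P (k t * g x) ^ 2 = (k t * g1 x) ^ 2) by (field; auto).
    assert (Hz2 : (k t * g1 x / P (k t * g x)) ^ 2 < 1) by nra.
    destruct (Rcase_abs (k t * g1 x / P (k t * g x))) as [Hn|Hn];
      [rewrite Rabs_left by lra | rewrite Rabs_right by lra]; nra.
  - assert (Hp2 : 0 < P (k t * g x) ^ 2).
    { apply pow2_gt_0 in HP0. simpl in *. nra. }
    replace (1 - (k t * g1 x / P (k t * g x)) ^ 2) with ((P (k t * g x) ^ 2 - (k t * g1 x) ^ 2) / P (k t * g x) ^ 2) by (field; auto).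
    assert (HD : P (k t * g x) ^ 2 - (k t * g1 x) ^ 2 <> 0) by lra.
    field_simplify_eq; [| repeat split; auto].
    lra.
Qed.


Lemma sin_periodZ x j : sin (x + 2 * IZR j * PI) = sin x.
Proof.
  destruct (Z.le_gt_cases 0 j) as [H|H].
  - rewrite <- (Z2Nat.id j H), <- INR_IZR_INZ. apply sin_period.
  - assert (E : IZR j = - INR (Z.to_nat (- j))).
    { rewrite INR_IZR_INZ, Z2Nat.id by lia. rewrite opp_IZR. ring. }
    rewrite E. rewrite <- (sin_period (x + 2 * - INR (Z.to_nat (- j)) * PI) (Z.to_nat (-j))).
    f_equal. ring.
Qed.

Lemma cosh_sinh x : cosh x ^ 2 = sinh x ^ 2 + 1.
Proof.
  unfold cosh, sinh. assert (E : exp x * exp (- x) = 1).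
  { rewrite <- exp_plus. replace (x + - x) with 0 by ring. apply exp_0. }
  nra.
Qed.

Lemma cosh_pos x : 0 < cosh x.
Proof. unfold cosh. pose proof (exp_pos x). pose proof (exp_pos (-x)). lra. Qed.

Lemma cosh_ge1 x : 1 <= cosh x.
Proof. pose proof (cosh_sinh x). pose proof (cosh_pos x). nra. Qed.

Lemma cosh_opp x : cosh (- x) = cosh x.
Proof. unfold cosh. rewrite Ropp_involutive. lra. Qed.

Lemma expm t : exp (- t) * exp t = 1.
Proof. rewrite <- exp_plus. replace (- t + t) with 0 by ring. apply exp_0. Qed.

Definition M x0 := exp (x0 + 1) + exp (1 - x0).

Lemma M_bound x0 x : x0 - 1 < x < x0 + 1 -> cosh x < M x0 /\ Rabs (sinh x) < M x0.
Proof.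
  intros H. unfold M, cosh, sinh.
  assert (A : exp x < exp (x0 + 1)) by (apply exp_increasing; lra).
  assert (B : exp (- x) < exp (1 - x0)) by (apply exp_increasing; lra).
  pose proof (exp_pos x). pose proof (exp_pos (-x)).
  split. lra. apply Rabs_def1; lra.
Qed.

Lemma exp_lt1 t : t < 0 -> exp t < 1.
Proof. intros. rewrite <- exp_0. apply exp_increasing. lra. Qed.
Lemma exp_gt1 t : 0 < t -> 1 < exp t.
Proof. intros. rewrite <- exp_0. apply exp_increasing. lra. Qed.

Definition Phi1 w := arcsinh (sqrt (w ^ 2 - 1)).

Lemma cosh_arcsinh v : cosh (arcsinh v) = sqrt (v ^ 2 + 1).
Proof.
  pose proof (cosh_sinh (arcsinh v)) as E. rewrite sinh_arcsinh in E.
  rewrite <- E. rewrite sqrt_pow2; [auto | left; apply cosh_pos].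
Qed.

Lemma cosh_Phi1 w : 1 <= w -> cosh (Phi1 w) = w.
Proof.
  intros H. unfold Phi1. rewrite cosh_arcsinh, pow2_sqrt by nra.
  replace (w ^ 2 - 1 + 1) with (w ^ 2) by ring. apply sqrt_pow2. lra.
Qed.

Lemma Phi1_inv y w : 0 < y -> cosh y = w -> y = Phi1 w.
Proof.
  intros Hy Hc. unfold Phi1. pose proof (sinh_lt 0 y Hy) as S. rewrite sinh_0 in S.
  pose proof (cosh_sinh y) as E.
  replace (w ^ 2 - 1) with (sinh y ^ 2) by (rewrite <- Hc; lra).
  rewrite sqrt_pow2 by lra. rewrite arcsinh_sinh. auto.
Qed.

Lemma Phi1_pos w : 1 < w -> 0 < Phi1 w.
Proof.
  intros H. unfold Phi1. rewrite <- arcsinh_0. apply arcsinh_lt.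
  apply sqrt_lt_R0. nra.
Qed.

Lemma Phi1_le w v : 1 <= w -> w <= v -> Phi1 w <= Phi1 v.
Proof.
  intros H1 H2. unfold Phi1. apply arcsinh_le. apply sqrt_le_1_alt. nra.
Qed.

Lemma cosh_eq_iff s y w : (s = 1 \/ s = -1) -> 1 <= w -> 0 < s * y ->
  (cosh y = w <-> y = s * Phi1 w).
Proof.
  intros Hs Hw Hy.
  assert (Cs : cosh (s * y) = cosh y).
  { destruct Hs; subst. f_equal; ring. replace (-1 * y) with (- y) by ring. apply cosh_opp. }
  split.
  - intros Hc. rewrite <- Cs in Hc. apply Phi1_inv in Hc; auto.
    destruct Hs; subst; lra.
  - intros ->. rewrite <- Cs.
    replace (s * (s * Phi1 w)) with (Phi1 w) by (destruct Hs; subst; ring).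
    apply cosh_Phi1; auto.
Qed.

Lemma em_iff a b t : a = exp (- t) * b <-> b = exp t * a.
Proof.
  pose proof (expm t). pose proof (exp_pos t). split; intros ->.
  - rewrite <- Rmult_assoc, (Rmult_comm (exp t)), H. ring.
  - rewrite <- Rmult_assoc, H. ring.
Qed.

Lemma d_cosh x : is_derive cosh x (sinh x).
Proof. apply is_derive_Reals, derivable_pt_lim_cosh. Qed.
Lemma d_sinh x : is_derive sinh x (cosh x).
Proof. apply is_derive_Reals, derivable_pt_lim_sinh. Qed.
Lemma d_exp x : is_derive exp x (exp x).
Proof. apply is_derive_Reals, derivable_pt_lim_exp. Qed.

Lemma wbound x0 T x t : x0 - 1 < x < x0 + 1 -> t < T ->
  0 < exp t * cosh x < exp T * M x0 /\ Rabs (exp t * sinh x) < exp T * M x0.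
Proof.
  intros Hx Ht. destruct (M_bound x0 x Hx) as [A B].
  assert (E : exp t < exp T) by (apply exp_increasing; lra).
  pose proof (exp_pos t). pose proof (cosh_pos x). pose proof (Rabs_pos (sinh x)).
  rewrite Rabs_mult, (Rabs_right (exp t)) by lra.
  split; [split|]; nra.
Qed.

Lemma case2 : spacelike_MCF (fun _ => True)
    (fun t x y => cosh x = exp (- t) * sinh y).
Proof.
  split.
  - intros t _. exists 0, (arcsinh (exp t)). rewrite sinh_arcsinh, expm.
    unfold cosh. rewrite Ropp_0, exp_0. field.
  - intros t0 x0 y0 _ H0.
    set (B := exp (t0+1) * M x0).
    assert (WB : forall x t, x0-1 < x < x0+1 -> t0-1 < t < t0+1 ->
                 0 < exp t * cosh x < B).
    { intros x t Hx Ht. apply (wbound x0 (t0+1) x t Hx). lra. }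
    assert (Y0 : y0 = arcsinh (exp t0 * cosh x0)).
    { apply (proj1 (em_iff _ _ t0)) in H0. rewrite <- H0, arcsinh_sinh. auto. }
    assert (RG : forall x t, x0-1 < x < x0+1 -> t0-1 < t < t0+1 ->
                 -1 < arcsinh (exp t * cosh x) < arcsinh B + 1).
    { intros x t Hx Ht. destruct (WB x t Hx Ht) as [W1 W2].
      pose proof (arcsinh_lt _ _ W1). pose proof (arcsinh_lt _ _ W2).
      rewrite arcsinh_0 in *. lra. }
    exists (x0-1), (x0+1), (-1), (arcsinh B + 1), (t0-1), (t0+1),
      (fun x t => arcsinh (exp t * cosh x)).
    split; [lra|]. split; [rewrite Y0; apply RG; lra|]. split; [lra|].
    split; [auto|]. split; [|split].
    + apply (graph_gen arcsinh (fun w => sqrt (w^2+1)) cosh sinh cosh exp exp 1).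
      intros x t Hx Ht.
      assert (P2 : sqrt ((exp t * cosh x)^2 + 1) ^ 2 = (exp t * cosh x)^2 + 1)
        by (apply pow2_sqrt; nra).
      pose proof (cosh_sinh x). pose proof (exp_pos t).
      split; [apply d_arcsinh|]. split; [apply d_P1|].
      split; [apply Rgt_not_eq, sqrt1_pos|].
      split; [apply d_cosh|]. split; [apply d_sinh|]. split; [apply d_exp|].
      rewrite P2. split; [nra|]. ring.
    + intros x t Hx Ht. apply RG; auto.
    + intros x y t Hx Hy Ht. rewrite (em_iff _ _ t). split.
      * intros E. rewrite <- E, arcsinh_sinh. auto.
      * intros ->. rewrite sinh_arcsinh. auto.
Qed.

Lemma case1 : spacelike_MCF (fun t => 0 < t)
    (fun t x y => cosh x = exp (- t) * cosh y).
Proof.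
  split.
  - intros t It. exists 0, (Phi1 (exp t)).
    rewrite cosh_Phi1 by (left; apply exp_gt1; auto). rewrite expm.
    unfold cosh. rewrite Ropp_0, exp_0. field.
  - intros t0 x0 y0 It H0.
    apply (proj1 (em_iff _ _ t0)) in H0.
    assert (W0 : 1 < exp t0 * cosh x0).
    { pose proof (exp_gt1 t0 It). pose proof (cosh_ge1 x0). nra. }
    assert (Sx : exists s, (s = 1 \/ s = -1) /\ 0 < s * y0).
    { destruct (Rtotal_order 0 y0) as [h|[h|h]].
      - exists 1. split; [auto|lra].
      - subst. rewrite cosh_0 in H0. lra.
      - exists (-1). split; [auto|lra]. }
    destruct Sx as [s [Hs Hsy]].
    assert (ss : s * s = 1) by (destruct Hs; subst; ring).
    set (B := exp (t0+1) * M x0).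
    set (D := Phi1 B + 1).
    assert (WB : forall x t, x0-1 < x < x0+1 -> t0/2 < t < t0+1 ->
                 1 < exp t * cosh x < B).
    { intros x t Hx Ht. destruct (wbound x0 (t0+1) x t Hx (proj2 Ht)) as [W _].
      pose proof (exp_gt1 t ltac:(lra)). pose proof (cosh_ge1 x). unfold B. split; nra. }
    assert (ST : forall y, (s-1)/2*D < y < (s+1)/2*D <-> 0 < s*y < D).
    { intros y. destruct Hs; subst; split; intros; lra. }
    assert (RG : forall w, 1 < w < B -> 0 < s * (s * Phi1 w) < D).
    { intros w Hw. rewrite <- Rmult_assoc, ss, Rmult_1_l.
      pose proof (Phi1_pos w (proj1 Hw)). pose proof (Phi1_le w B ltac:(lra) ltac:(lra)).
      unfold D. lra. }
    assert (Y0 : y0 = s * Phi1 (exp t0 * cosh x0)).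
    { apply (cosh_eq_iff s y0 (exp t0 * cosh x0) Hs ltac:(lra) Hsy). auto. }
    exists (x0-1), (x0+1), ((s-1)/2*D), ((s+1)/2*D), (t0/2), (t0+1),
      (fun x t => s * Phi1 (exp t * cosh x)).
    split; [lra|]. split; [apply ST; rewrite Y0; apply RG; apply WB; lra|].
    split; [lra|]. split; [intros; lra|]. split; [|split].
    + apply (graph_gen (fun w => s * arcsinh (sqrt (w^2 - 1))) (fun w => s * sqrt (w^2 - 1))
               cosh sinh cosh exp exp 1).
      intros x t Hx Ht. destruct (WB x t Hx Ht) as [W1 W2].
      assert (P2 : (s * sqrt ((exp t * cosh x)^2 - 1)) ^ 2 = (exp t * cosh x)^2 - 1).
      { rewrite Rpow_mult_distr, pow2_sqrt by nra. replace (s^2) with (s*s) by ring.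
        rewrite ss. ring. }
      assert (Q : 0 < sqrt ((exp t * cosh x)^2 - 1)) by (apply sqrt_lt_R0; nra).
      pose proof (cosh_sinh x). pose proof (exp_pos t).
      assert (E1 : 1 < exp t) by (apply exp_gt1; lra).
      split; [apply d_Phi1; auto|]. split; [apply d_P1'; auto|].
      split; [intro HH; destruct Hs; subst; lra|].
      split; [apply d_cosh|]. split; [apply d_sinh|]. split; [apply d_exp|].
      rewrite P2. split; [|ring].
      rewrite !Rpow_mult_distr, H. nra.
    + intros x t Hx Ht. apply ST, RG, WB; auto.
    + intros x y t Hx Hy Ht. rewrite (em_iff _ _ t).
      apply ST in Hy. destruct (WB x t Hx Ht).
      apply cosh_eq_iff; auto; lra.
Qed.

Lemma case3 : spacelike_MCF (fun t => t < 0)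
    (fun t x y => sinh x = exp (- t) * sinh y).
Proof.
  split.
  - intros t _. exists 0, 0. rewrite sinh_0. ring.
  - intros t0 x0 y0 It H0.
    set (B := exp (t0/2) * M x0).
    assert (WB : forall x t, x0-1 < x < x0+1 -> t0-1 < t < t0/2 ->
                 - B < exp t * sinh x < B).
    { intros x t Hx Ht. destruct (wbound x0 (t0/2) x t Hx (proj2 Ht)) as [_ W].
      apply Rabs_def2 in W. unfold B. destruct W. split; lra. }
    assert (Y0 : y0 = arcsinh (exp t0 * sinh x0)).
    { apply (proj1 (em_iff _ _ t0)) in H0. rewrite <- H0, arcsinh_sinh. auto. }
    assert (RG : forall x t, x0-1 < x < x0+1 -> t0-1 < t < t0/2 ->
                 arcsinh (- B) - 1 < arcsinh (exp t * sinh x) < arcsinh B + 1).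
    { intros x t Hx Ht. destruct (WB x t Hx Ht) as [W1 W2].
      pose proof (arcsinh_lt _ _ W1). pose proof (arcsinh_lt _ _ W2). lra. }
    exists (x0-1), (x0+1), (arcsinh (- B) - 1), (arcsinh B + 1), (t0-1), (t0/2),
      (fun x t => arcsinh (exp t * sinh x)).
    split; [lra|]. split; [rewrite Y0; apply RG; lra|]. split; [lra|].
    split; [intros; lra|]. split; [|split].
    + apply (graph_gen arcsinh (fun w => sqrt (w^2+1)) sinh cosh sinh exp exp 1).
      intros x t Hx Ht.
      assert (P2 : sqrt ((exp t * sinh x)^2 + 1) ^ 2 = (exp t * sinh x)^2 + 1)
        by (apply pow2_sqrt; nra).
      pose proof (cosh_sinh x). pose proof (exp_pos t).
      assert (E1 : exp t < 1) by (apply exp_lt1; lra).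
      split; [apply d_arcsinh|]. split; [apply d_P1|].
      split; [apply Rgt_not_eq, sqrt1_pos|].
      split; [apply d_sinh|]. split; [apply d_cosh|]. split; [apply d_exp|].
      rewrite P2. split; [|ring].
      rewrite !Rpow_mult_distr, H. nra.
    + intros x t Hx Ht. apply RG; auto.
    + intros x y t Hx Hy Ht. rewrite (em_iff _ _ t). split.
      * intros E. rewrite <- E, arcsinh_sinh. auto.
      * intros ->. rewrite sinh_arcsinh. auto.
Qed.

Lemma sin_s s a : (s = 1 \/ s = -1) -> sin (s * a) = s * sin a.
Proof. intros [->| ->]. rewrite !Rmult_1_l; auto. replace (-1 * a) with (- a) by ring. rewrite sin_neg. ring. Qed.

Lemma asin_s s a : (s = 1 \/ s = -1) -> asin (s * a) = s * asin a.
Proof. intros [->| ->]. rewrite !Rmult_1_l; auto. replace (-1 * a) with (- a) by ring. rewrite asin_opp. ring. Qed.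

Lemma sin_eq_iff s C0 y w : (s = 1 \/ s = -1) -> -1 < w < 1 ->
  (forall v, sin (v + C0) = s * sin v) ->
  C0 - PI/2 < y < C0 + PI/2 ->
  (sin y = w <-> y = C0 + s * asin w).
Proof.
  intros Hs Hw Hsh Hy.
  assert (ss : s * s = 1) by (destruct Hs; subst; ring).
  replace y with ((y - C0) + C0) by ring. rewrite Hsh.
  split.
  - intros E. assert (E2 : sin (y - C0) = s * w) by (rewrite <- E, <- Rmult_assoc, ss; ring).
    rewrite <- asin_s by auto. rewrite <- E2. rewrite asin_sin by lra. ring.
  - intros E. replace (y - C0) with (s * asin w) by lra.
    rewrite sin_s, sin_asin by (auto; lra). rewrite <- Rmult_assoc, ss. ring.
Qed.

Lemma d_sin x : is_derive sin x (cos x).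
Proof. apply is_derive_Reals, derivable_pt_lim_sin. Qed.
Lemma d_cos x : is_derive cos x (- sin x).
Proof. apply is_derive_Reals, derivable_pt_lim_cos. Qed.
Lemma d_expm t : is_derive (fun t => exp (- t)) t (- exp (- t)).
Proof. auto_derive; auto. ring. Qed.

Lemma case4 : spacelike_MCF (fun t => 0 < t)
    (fun t x y => sin y = exp (- t) * sin x).
Proof.
  split.
  - intros t _. exists 0, 0. rewrite sin_0. ring.
  - intros t0 x0 y0 It H0.
    assert (WB : forall x t, 0 < t -> -1 < exp (- t) * sin x < 1).
    { intros x t Ht. pose proof (exp_lt1 (- t) ltac:(lra)). pose proof (exp_pos (- t)).
      pose proof (SIN_bound x). split; nra. }
    pose proof PI_RGT_0 as HPI.
    set (r := (y0 + PI/2) / (2*PI)).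
    set (j := (up r - 1)%Z).
    set (m := 2 * IZR j * PI).
    assert (Hm : m - PI/2 <= y0 < m + 3*PI/2).
    { destruct (archimed r) as [A1 A2].
      assert (Ij : IZR j = IZR (up r) - 1) by (unfold j; rewrite minus_IZR; auto).
      assert (Er : r * (2*PI) = y0 + PI/2) by (unfold r; field; lra).
      unfold m. rewrite Ij. nra. }
    assert (Sy : forall v, sin (v + m) = sin v) by (intros; apply sin_periodZ).
    assert (Sx : exists s, (s = 1 \/ s = -1) /\
               (forall v, sin (v + (m + (1 - s)/2*PI)) = s * sin v) /\
               (m + (1-s)/2*PI) - PI/2 < y0 < (m + (1-s)/2*PI) + PI/2).
    { destruct (Rtotal_order (y0 - m) (PI/2)) as [h|[h|h]].
      - exists 1. split; [auto|]. split.
        + intros v. replace (m + (1-1)/2*PI) with m by field. rewrite Sy. ring.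
        + split; [|lra]. destruct (Rle_lt_or_eq_dec _ _ (proj1 Hm)) as [h2|h2]; [lra|].
          exfalso. pose proof (WB x0 t0 It). rewrite <- H0 in H.
          rewrite <- h2 in H. replace (m - PI/2) with (- (PI/2) + m) in H by field.
          rewrite Sy, sin_neg, sin_PI2 in H. lra.
      - exfalso. pose proof (WB x0 t0 It). rewrite <- H0 in H.
        replace y0 with (PI/2 + m) in H by lra. rewrite Sy, sin_PI2 in H. lra.
      - exists (-1). split; [auto|]. split.
        + intros v. replace (v + (m + (1 - -1)/2*PI)) with ((v + PI) + m) by field.
          rewrite Sy, neg_sin. ring.
        + lra. }
    destruct Sx as [s [Hs [Hsh Hy0]]].
    set (C0 := m + (1-s)/2*PI) in *.
    assert (ss : s * s = 1) by (destruct Hs; subst; ring).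
    assert (RG : forall w, -1 < w < 1 -> C0 - PI/2 < C0 + s * asin w < C0 + PI/2).
    { intros w Hw. pose proof (asin_bound_lt w Hw). destruct Hs; subst; lra. }
    exists (x0-1), (x0+1), (C0 - PI/2), (C0 + PI/2), (t0/2), (t0+1),
      (fun x t => C0 + s * asin (exp (- t) * sin x)).
    split; [lra|]. split; [auto|].
    split; [lra|]. split; [intros; lra|]. split; [|split].
    + apply (graph_gen (fun w => C0 + s * asin w) (fun w => s * sqrt (1 - w^2))
               sin cos (fun x => - sin x) (fun t => exp (- t)) (fun t => - exp (- t)) (-1)).
      intros x t Hx Ht. cbv beta. pose proof (WB x t ltac:(lra)) as Hw.
      assert (P2 : (s * sqrt (1 - (exp (- t) * sin x)^2)) ^ 2 = 1 - (exp (- t) * sin x)^2).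
      { rewrite Rpow_mult_distr, pow2_sqrt by nra. replace (s^2) with (s*s) by ring.
        rewrite ss. ring. }
      assert (Q : 0 < sqrt (1 - (exp (- t) * sin x)^2)) by (apply sqrt_lt_R0; nra).
      pose proof (sin2_cos2 x) as SC. unfold Rsqr in SC.
      pose proof (exp_pos (- t)).
      assert (E1 : exp (- t) < 1) by (apply exp_lt1; lra).
      split; [apply d_Phi4; auto|]. split; [apply d_P4; auto|].
      split; [intro HH; destruct Hs; subst; lra|].
      split; [apply d_sin|]. split; [apply d_cos|]. split; [apply d_expm|].
      rewrite P2. split; [|ring].
      rewrite !Rpow_mult_distr. nra.
    + intros x t Hx Ht. apply RG, WB; lra.
    + intros x y t Hx Hy Ht. apply sin_eq_iff; auto. apply WB; lra.
Qed.

Theorem theorem11p1 :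
  spacelike_MCF (fun t => 0 < t)
    (fun t x y => cosh x = exp (- t) * cosh y) /\
  spacelike_MCF (fun _ => True)
    (fun t x y => cosh x = exp (- t) * sinh y) /\
  spacelike_MCF (fun t => t < 0)
    (fun t x y => sinh x = exp (- t) * sinh y) /\
  spacelike_MCF (fun t => 0 < t)
    (fun t x y => sin y = exp (- t) * sin x).
Proof.
  split; [exact case1|]. split; [exact case2|]. split; [exact case3|]. exact case4.
Qed.
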